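(* Let $e\ge2$, let $\lambda$ be an $e$-regular partition with outer corners $c_1<\dots<c_r$ and inner corners $i_1<\dots<i_{r+1}$, and let $\omega^{(0)},\dots,\omega^{(r)}$ and $h_1,\dots,h_r$ be as in the outer flattening construction. Then for each $k\in\{1,\dots,r\}$: $h_k\in[i_k-1,i_k)$; the functions $\omega^{(k-1)}$ and $\omega^{(k)}$ coincide outside $(i_k-1,c_k)$; and $0\le\omega^{(k)}(s)-\omega^{(k-1)}(s)\le e$ for all $s\in(i_k-1,c_k)$.
   Context: A partition $\lambda=(\lambda_1\ge\dots\ge\lambda_h>0)$ is $e$-regular if $\lambda_i>\lambda_{i+e-1}$ for all $i\le h-e+1$. $Y(\lambda)=\{(a,b):1\le a\le h,1\le b\le\lambda_a\}$; node $(a,b)$ corresponds to the closed square with vertices $(a-b,a+b),(a-b\pm1,a+b-1),(a-b,a+b-2)$, and $\omega_\lambda(x)=\max(|x|,\sup\{y:(x,y)\text{ lies in one of these squares}\})$; $\omega_\lambda$ is piecewise linear with slope $\pm1$ on each $(k,k+1)$, $k\in\mathbb Z$. An integer $c$ is an outer (resp. inner) corner if $\omega_\lambda'=1$ on $(c-1,c)$ and $-1$ on $(c,c+1)$ (resp. $-1$ then $1$). Let $\alpha_e=1-2e^{-1}$. Outer flattening: $\omega^{(0)}=\omega_\lambda$; for $k=1,\dots,r$, let $h_k<c_k$ be the abscissa of the first point where the line of slope $\alpha_e$ through $(c_k,\omega_\lambda(c_k))$, followed from $c_k$ in the negative direction, meets the graph of $\omega^{(k-1)}$; define $\omega^{(k)}=\omega^{(k-1)}$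 on $(-\infty,h_k]\cup[c_k,\infty)$ and $\omega^{(k)}(s)=\omega_\lambda(c_k)+\alpha_e(s-c_k)$ for $s\in[h_k,c_k]$. *)

(* Defs.v *)
From HB Require Import structures.
From mathcomp Require Import all_boot all_order all_algebra.
From mathcomp Require Import all_classical all_reals all_analysis.
Set Implicit Arguments. Unset Strict Implicit. Unset Printing Implicit Defensive.
Import Order.TTheory GRing.Theory Num.Theory.
Import numFieldNormedType.Exports.
Local Open Scope classical_set_scope.
Local Open Scope ring_scope.

(* A partition is a seq nat: lambda = [:: l_1; ...; l_h], l_1 >= ... >= l_h > 0.
   l_a (1-indexed) is  nth 0 lam a.-1. *)
Definition is_partition (lam : seq nat) : Prop :=
  sorted geq lam /\ all (fun x => 0 < x)%N lam.

Definition e_regular (e : nat) (lam : seq nat) : Prop :=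
  forall i : nat, (1 <= i)%N -> (i + e - 1 <= size lam)%N ->
    (nth 0 lam (i + e - 1).-1 < nth 0 lam i.-1)%N.

Definition node (lam : seq nat) (a b : nat) : Prop :=
  (1 <= a <= size lam)%N /\ (1 <= b <= nth 0 lam a.-1)%N.

(* the closed square with vertices (a-b,a+b), (a-b+-1,a+b-1), (a-b,a+b-2) *)
Definition node_square {R : realType} (a b : nat) : set (R * R) :=
  [set p | `|p.1 - (a%:R - b%:R)| + `|p.2 - (a%:R + b%:R - 1)| <= 1].

Definition omega {R : realType} (lam : seq nat) (x : R) : R :=
  Num.max `|x|
    (sup [set y : R | exists a b, node lam a b /\ node_square a b (x, y)]).

Definition outer_corner {R : realType} (w : R -> R) (c : int) : Prop :=
  (forall x : R, c%:~R - 1 < x < c%:~R -> is_derive x 1 w 1) /\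
  (forall x : R, c%:~R < x < c%:~R + 1 -> is_derive x 1 w (-1)).

Definition inner_corner {R : realType} (w : R -> R) (c : int) : Prop :=
  (forall x : R, c%:~R - 1 < x < c%:~R -> is_derive x 1 w (-1)) /\
  (forall x : R, c%:~R < x < c%:~R + 1 -> is_derive x 1 w 1).

Definition alpha {R : realType} (e : nat) : R := 1 - 2 / e%:R.

(* The outer flattening: w k = omega^{(k)}, h k = h_k (k = 1..r), with
   c_k = nth 0 cs k.-1.  Here L_k(s) = omega_lambda(c_k) + alpha_e (s - c_k). *)
Definition outer_flattening {R : realType} (e : nat) (lam : seq nat)
    (cs : seq int) (w : nat -> R -> R) (h : nat -> R) : Prop :=
  w 0%N = omega lam /\
  forall k : nat, (1 <= k <= size cs)%N ->
    let c : R := (nth 0 cs k.-1)%:~R in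
    let L := fun s : R => omega lam c + alpha e * (s - c) in
    [/\ h k < c,
        w k.-1 (h k) = L (h k),
        (forall s : R, h k < s < c -> w k.-1 s != L s) &
        (forall s : R, w k s = if (h k <= s <= c) then L s else w k.-1 s)].

(* Main.v *)
Require Import Defs.
From HB Require Import structures.
From mathcomp Require Import all_boot all_order all_algebra.
From mathcomp Require Import all_classical all_reals all_analysis.
From mathcomp Require Import ring lra zify.
Import Order.TTheory GRing.Theory Num.Theory.
Import numFieldNormedType.Exports.
Local Open Scope classical_set_scope.
Local Open Scope ring_scope.
Set Implicit Arguments. Unset Strict Implicit. Unset Printing Implicit Defensive.

Definition tentf {R : realType} (a la : nat) (x : R) : R :=
  Num.min (x + 2 * la%:R) (2 * a%:R - x).

Fixpoint Fr {R : realType} (l : seq nat) (a : nat) (x : R) : R :=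
  match l with
  | [::] => `|x|
  | la :: l' => Num.max (tentf a.+1 la x) (Fr l' a.+1 x)
  end.

Lemma Fr_ge_abs {R : realType} l a (x : R) : `|x| <= Fr l a x.
Proof.
elim: l a => [|la l IH] a /=; first by [].
by rewrite le_max IH orbT.
Qed.

Lemma Fr_ge_tent {R : realType} l a (x : R) j : (j < size l)%N ->
  tentf (a + j).+1 (nth 0%N l j) x <= Fr l a x.
Proof.
elim: l a j => [|la l IH] a j //=.
case: j => [|j] /= Hj; first by rewrite addn0 le_max lexx.
by rewrite le_max -addSnnS IH ?orbT.
Qed.

Lemma Fr_attain {R : realType} l a (x : R) :
  Fr l a x = `|x| \/ exists j, (j < size l)%N /\ Fr l a x = tentf (a + j).+1 (nth 0%N l j) x.
Proof.
elim: l a => [|la l IH] a /=; first by left.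
case: (leP (tentf a.+1 la x) (Fr l a.+1 x)) => H.
-   case: (IH a.+1) => [->|[j [Hj ->]]]; first by left.
  by right; exists j.+1; split => //; rewrite addSnnS.
- by right; exists 0%N; rewrite addn0.
Qed.

Lemma Fr_ub {R : realType} l a (x y : R) : `|x| <= y ->
  (forall j, (j < size l)%N -> tentf (a + j).+1 (nth 0%N l j) x <= y) -> Fr l a x <= y.
Proof.
move=> H1 H2; case: (Fr_attain l a x) => [->|[j [Hj ->]]] //; exact: H2.
Qed.

Definition line {R : realType} (b : bool) (m : int) (x : R) : R :=
  (if b then x else - x) + 2 * m%:~R.

Definition PLn {R : realType} (f : R -> R) (n : int) : Prop :=
  exists b m, forall x, n%:~R <= x <= n%:~R + 1 -> f x = line b m x.

Lemma int_side {R : realType} (n k : int) :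
  (forall x : R, n%:~R <= x <= n%:~R + 1 -> k%:~R <= x) \/
  (forall x : R, n%:~R <= x <= n%:~R + 1 -> x <= k%:~R).
Proof.
case: (leP k n) => H.
- left => x /andP [Hx _]; apply: le_trans Hx; by rewrite ler_int.
- right => x /andP [_ Hx]; apply: le_trans Hx _.
  have : n + 1 <= k by lia.
  by rewrite -(ler_int R) rmorphD /=.
Qed.

Lemma cmp_lines {R : realType} (n : int) b1 m1 b2 m2 :
  (forall x : R, n%:~R <= x <= n%:~R + 1 -> line b1 m1 x <= line b2 m2 x) \/
  (forall x : R, n%:~R <= x <= n%:~R + 1 -> line b2 m2 x <= line b1 m1 x).
Proof.
rewrite /line.
case: b1; case: b2.
- case: (leP m1 m2) => H; [left|right] => x _;
   rewrite lerD2l ler_pM2l // ler_int //; exact: ltW.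
- case: (@int_side R n (m2 - m1)) => H; [right|left] => x /H; rewrite rmorphB /=; lra.
- case: (@int_side R n (m1 - m2)) => H; [left|right] => x /H; rewrite rmorphB /=; lra.
- case: (leP m1 m2) => H; [left|right] => x _;
   rewrite lerD2l ler_pM2l // ler_int //; exact: ltW.
Qed.

Lemma PLn_max {R : realType} (f g : R -> R) n :
  PLn f n -> PLn g n -> PLn (fun x => Num.max (f x) (g x)) n.
Proof.
move=> [b1 [m1 H1]] [b2 [m2 H2]].
case: (@cmp_lines R n b1 m1 b2 m2) => H.
- exists b2, m2 => x Hx; rewrite H1 // H2 //; apply/max_idPr; exact: H.
- exists b1, m1 => x Hx; rewrite H1 // H2 //; apply/max_idPl; exact: H.
Qed.

Lemma PLn_min {R : realType} (f g : R -> R) n :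
  PLn f n -> PLn g n -> PLn (fun x => Num.min (f x) (g x)) n.
Proof.
move=> [b1 [m1 H1]] [b2 [m2 H2]].
case: (@cmp_lines R n b1 m1 b2 m2) => H.
- exists b1, m1 => x Hx; rewrite H1 // H2 //; apply/min_idPl; exact: H.
- exists b2, m2 => x Hx; rewrite H1 // H2 //; apply/min_idPr; exact: H.
Qed.

Lemma PLn_abs {R : realType} n : PLn (fun x : R => `|x|) n.
Proof.
case: (leP 0 n) => H.
- exists true, 0 => x /andP [Hx _]; rewrite /line mulr0 addr0 ger0_norm //.
  apply: le_trans Hx; by rewrite ler0z.
- exists false, 0 => x /andP [_ Hx]; rewrite /line mulr0 addr0 ler0_norm //.
  apply: le_trans Hx _.
  have : n + 1 <= 0 by lia.
  by rewrite -(ler_int R) rmorphD /=.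
Qed.

Lemma PLn_tent {R : realType} a la n : PLn (fun x : R => tentf a la x) n.
Proof.
apply: (@PLn_min R (fun x => x + 2 * la%:R) (fun x => 2 * a%:R - x)).
- by exists true, la%:Z => x _; rewrite /line.
- by exists false, a%:Z => x _; rewrite /line addrC.
Qed.

Lemma PLn_Fr {R : realType} l a n : PLn (fun x : R => Fr l a x) n.
Proof.
elim: l a => [|la l IH] a /=; first exact: PLn_abs.
exact: (PLn_max (PLn_tent _ _ _) (IH _)).
Qed.

Lemma min_pm {R : realType} (u t : R) : Num.min (u + t) (u - t) = u - `|t|.
Proof.
case: (leP 0 t) => H.
- rewrite ger0_norm //; apply/min_idPr; lra.
- rewrite ltr0_norm //; rewrite opprK; apply/min_idPl; lra.
Qed.

Lemma tent_cell {R : realType} (a la : nat) (x : R) :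
  tentf a la x = (a%:R + la%:R) - `|x - (a%:R - la%:R)|.
Proof.
rewrite /tentf -min_pm; congr Num.min; lra.
Qed.

Lemma cell_le_tent {R : realType} lam a b (x : R) : node lam a b ->
  (a%:R + b%:R) - `|x - (a%:R - b%:R)| <= tentf a (nth 0%N lam a.-1) x.
Proof.
move=> [_ /andP [_ Hb]].
have : b%:R <= (nth 0%N lam a.-1)%:R :> R by rewrite ler_nat.
rewrite /tentf le_min; set l := (nth _ _ _)%:R => Hbl.
case: (leP 0 (x - (a%:R - b%:R))) => H.
- rewrite ger0_norm //; apply/andP; split; lra.
- rewrite ltr0_norm //; apply/andP; split; lra.
Qed.

Definition Fl {R : realType} (lam : seq nat) (x : R) : R := Fr lam 0 x.

Lemma omega_le_F {R : realType} lam (x : R) : omega lam x <= Fl lam x.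
Proof.
rewrite /omega ge_max Fr_ge_abs /=.
set S := [set y : R | _].
have ub : (ubound S) (Fl lam x).
  move=> y [a [b [Hn /=]]]; rewrite /node_square /= => Hs.
  apply: le_trans (_ : (a%:R + b%:R) - `|x - (a%:R - b%:R)| <= _).
    have := ler_norm (y - (a%:R + b%:R - 1)); lra.
  apply: le_trans (cell_le_tent x Hn) _.
  case: Hn => /andP [Ha1 Ha2] _.
  have -> : a = (0 + a.-1).+1 by rewrite add0n prednK.
  by apply: Fr_ge_tent; rewrite prednK.
case: (pselect (exists y, S y)) => [[y Sy]|NS].
- by apply: ge_sup => //; exists y.
- have -> : S = set0.
    by apply/seteqP; split => y //= Sy; exfalso; apply: NS; exists y.
  rewrite sup0; apply: le_trans (Fr_ge_abs _ _ _); exact: normr_ge0.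
Qed.

Lemma cell_le_omega {R : realType} lam a b (x : R) : node lam a b ->
  `|x - (a%:R - b%:R)| <= 1 ->
  (a%:R + b%:R) - `|x - (a%:R - b%:R)| <= omega lam x.
Proof.
move=> Hn Hd; rewrite /omega le_max; apply/orP; right.
set S := [set y : R | _].
have ub : (ubound S) (Fl lam x).
  move=> y [a' [b' [Hn' /=]]]; rewrite /node_square /= => Hs.
  apply: le_trans (_ : (a'%:R + b'%:R) - `|x - (a'%:R - b'%:R)| <= _).
    have := ler_norm (y - (a'%:R + b'%:R - 1)); lra.
  apply: le_trans (cell_le_tent x Hn') _.
  case: Hn' => /andP [Ha1 Ha2] _.
  have -> : a' = (0 + a'.-1).+1 by rewrite add0n prednK.
  by apply: Fr_ge_tent; rewrite prednK.
apply: ub_le_sup; first by exists (Fl lam x).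
exists a, b; split => //; rewrite /node_square /=.
rewrite (_ : a%:R + b%:R - `|x - (a%:R - b%:R)| - (a%:R + b%:R - 1) = 1 - `|x - (a%:R - b%:R)|); last by lra.
rewrite [`|1 - _|]ger0_norm; lra.
Qed.

Lemma geq_trans' : transitive geq.
Proof. move=> ? ? ? /= H1 H2; exact: leq_trans H2 H1. Qed.

Lemma F_le_omega {R : realType} lam (x : R) : is_partition lam ->
  Fl lam x <= omega lam x.
Proof.
move=> [Hsort Hpos].
have absle : `|x| <= omega lam x by rewrite /omega le_max lexx.
apply: Fr_ub => // j Hj; rewrite add0n.
set la := nth 0%N lam j.
have la1 : (0 < la)%N by apply: (all_nthP 0%N Hpos).
have nodeA : forall b, (1 <= b <= la)%N -> node lam j.+1 b.
  by move=> b Hb; split => //=; rewrite ltnS.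
have la1R : 1 <= la%:R :> R by rewrite ler1n.
case: (lerP `|x - (j.+1%:R - la%:R)| 1) => H1.
  rewrite tent_cell; apply: cell_le_omega => //; apply: nodeA; by rewrite la1 leqnn.
case: (lerP 0 (x - (j.+1%:R - la%:R))) => H2.
-
  rewrite ger0_norm // in H1.
  have -> : tentf j.+1 la x = 2 * j.+1%:R - x.
    rewrite /tentf; apply/min_idPr; lra.
  case: (lerP j.+1%:R x) => H3.
    apply: le_trans absle; apply: le_trans (ler_norm x); lra.
  have Hp : 0 <= j.+1%:R - x by lra.
  have /andP [T1 T2] := truncn_itv Hp.
  set t := Num.truncn _ in T1 T2.
  have E1 : t.+1%:R = t%:R + 1 :> R by rewrite natr1.
  have E2 : j.+1%:R = j%:R + 1 :> R by rewrite natr1.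
  have Tl : (t.+1 <= la)%N by rewrite -(ler_nat R); lra.
  have := cell_le_omega (x:=x) (nodeA t.+1 Tl).
  rewrite ger0_norm; last by lra.
  move=> /(_ ltac:(lra)); lra.
-
  rewrite ltr0_norm // in H1.
  have -> : tentf j.+1 la x = x + 2 * la%:R.
    rewrite /tentf; apply/min_idPl; lra.
  case: (lerP (x + la%:R) 0) => H3.
    apply: le_trans absle; rewrite ler0_norm; lra.
  have Hp : 0 <= x + la%:R by lra.
  have /andP [T1 T2] := truncn_itv Hp.
  set t := Num.truncn _ in T1 T2.
  have E1 : t.+1%:R = t%:R + 1 :> R by rewrite natr1.
  have E2 : j.+1%:R = j%:R + 1 :> R by rewrite natr1.
  have Tj : (t <= j)%N by rewrite -(ler_nat R); lra.
  have Hnode : node lam t.+1 la.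
    split; first by rewrite /= (leq_ltn_trans Tj Hj).
    rewrite /= la1 /=.
    have := sorted_leq_nth geq_trans' leqnn 0%N Hsort.
    move=> /(_ t j); rewrite !inE => /(_ (leq_ltn_trans Tj Hj) Hj Tj).
    by [].
  have := cell_le_omega (x:=x) Hnode.
  rewrite ltr0_norm; last by lra.
  move=> /(_ ltac:(lra)); lra.
Qed.

Lemma omega_F {R : realType} lam : is_partition lam -> @omega R lam = Fl lam.
Proof.
move=> Hp; apply: funext => x; apply/le_anti; rewrite omega_le_F F_le_omega //.
Qed.

Definition sl {R : realType} lam (n : int) : R := Fl lam (n%:~R + 1) - Fl lam n%:~R.

Lemma F_affine {R : realType} lam (n : int) (x : R) : n%:~R <= x <= n%:~R + 1 ->
  Fl lam x = Fl lam n%:~R + sl lam n * (x - n%:~R).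
Proof.
move=> Hx; have [b [m H]] := @PLn_Fr R lam 0 n; rewrite /sl /Fl.
rewrite !H ?Hx ?lexx ?lerDl ?ler01 ?andbT //; rewrite /line.
clear H; case: b; lra.
Qed.

Lemma sl_pm {R : realType} lam n : @sl R lam n = 1 \/ @sl R lam n = -1.
Proof.
have [b [m H]] := @PLn_Fr R lam 0 n; rewrite /sl /Fl.
rewrite !H ?lexx ?lerDl ?ler01 ?andbT //; rewrite /line.
clear H; case: b; [left|right]; lra.
Qed.

Lemma affine_derive (R : realType) (F : R -> R) (a b p s x : R) :
  a < x < b -> (forall y, a < y < b -> F y = p + s * y) -> is_derive x 1 F s.
Proof.
move=> xab HF.
have H : is_derive x 1 (fun y : R => p + s *: y) (0 + s *: 1).
  apply: is_deriveD.
rewrite add0r scaler1 in H.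
apply: (near_eq_is_derive _ H).
have : x \in `]a, b[ by rewrite in_itv.
move/near_in_itvoo; apply: filterS => y; rewrite in_itv /= => /HF ->.
by [].
Qed.

Lemma deriv_iff {R : realType} lam (n : int) (d : R) :
  (forall x : R, n%:~R < x < n%:~R + 1 -> is_derive x 1 (Fl lam) d) <-> sl lam n = d.
Proof.
have HD : forall x : R, n%:~R < x < n%:~R + 1 -> is_derive x 1 (Fl lam) (sl lam n).
  move=> x Hx; apply: (affine_derive (a := n%:~R) (b := n%:~R + 1)
    (p := Fl lam n%:~R - sl lam n * n%:~R)) => // y /andP [H1 H2].
  rewrite (@F_affine R lam n y); last by rewrite (ltW H1) (ltW H2).
  lra.
split.
- move=> H.
  have Hx : n%:~R < (n%:~R + 2^-1 : R) < n%:~R + 1.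
    by apply/andP; split; lra.
  have D1 := H _ Hx; have D2 := HD _ Hx.
  by rewrite -(@derive_val _ _ _ _ _ _ _ D1) -(@derive_val _ _ _ _ _ _ _ D2).
- by move=> <-.
Qed.

Lemma outer_iff {R : realType} lam (c : int) :
  outer_corner (@Fl R lam) c <-> (@sl R lam (c - 1) = 1 /\ @sl R lam c = -1).
Proof.
have E : (c - 1)%:~R = c%:~R - 1 :> R by rewrite rmorphB.
rewrite /outer_corner -(deriv_iff lam c) -(deriv_iff lam (c - 1)) E.
by rewrite subrK.
Qed.

Lemma inner_iff {R : realType} lam (c : int) :
  inner_corner (@Fl R lam) c <-> (@sl R lam (c - 1) = -1 /\ @sl R lam c = 1).
Proof.
have E : (c - 1)%:~R = c%:~R - 1 :> R by rewrite rmorphB.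
rewrite /inner_corner -(deriv_iff lam c) -(deriv_iff lam (c - 1)) E.
by rewrite subrK.
Qed.

Lemma Fr_left {R : realType} l a (x : R) : x <= 0 ->
  (forall y, y \in l -> x + y%:R <= 0) -> Fr l a x = - x.
Proof.
move=> Hx; elim: l a => [|la l IH] a H /=; first by rewrite ler0_norm.
rewrite IH; last by move=> y Hy; apply: H; rewrite inE Hy orbT.
apply/max_idPr; rewrite /tentf ge_min; apply/orP; left.
have := H la; rewrite inE eqxx => /(_ isT); lra.
Qed.

Lemma mem_sumn l y : y \in l -> (y <= sumn l)%N.
Proof.
elim: l => [|z l IH] //=; rewrite inE => /orP [/eqP ->|/IH H]; first exact: leq_addr.
exact: leq_trans H (leq_addl _ _).
Qed.

Lemma sl_left {R : realType} lam (n : int) : n <= - (sumn lam)%:Z - 1 -> @sl R lam n = -1.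
Proof.
move=> Hn.
have HK : forall x : R, x <= - (sumn lam)%:R -> Fl lam x = - x.
  move=> x Hx; apply: Fr_left.
    apply: le_trans Hx _; rewrite lerNl oppr0; exact: ler0n.
  move=> y Hy; have := mem_sumn Hy; rewrite -(ler_nat R); lra.
have Hn' : n%:~R + 1 <= - (sumn lam)%:R :> R.
  have : n + 1 <= - (sumn lam)%:Z by lia.
  by rewrite -(ler_int R) rmorphD /= rmorphN.
rewrite /sl !HK //; lra.
Qed.

Definition Ncnt (l : seq int) (m : int) : nat := count (fun y => y <= m) l.

Lemma Ncnt_nth (l : seq int) (m : int) j : sorted <%R l -> (j < size l)%N ->
  (nth 0 l j <= m) = (j < Ncnt l m)%N.
Proof.
elim: l j => [|x l IH] j //= Hs Hj.
have Hs' : sorted <%R l by apply: path_sorted Hs.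
have Hall : all (fun y => x < y) l.
  by have := Hs; rewrite (path_sortedE lt_trans) => /andP [].
case: (leP x m) => Hx.
- case: j Hj => [|j] Hj //=; rewrite add1n ltnS; exact: IH.
- have -> : Ncnt l m = 0%N.
    apply/eqP; rewrite -leqn0 leqNgt -has_count; apply/hasPn => y Hy.
    have := allP Hall y Hy; rewrite -real_ltNge ?num_real //; lra.
  rewrite add0n ltn0; apply/negbTE; rewrite -real_ltNge ?num_real //.
  case: j Hj => [|j] Hj //=.
  apply: lt_trans Hx _; apply: (allP Hall); apply: mem_nth; by rewrite -ltnS.
Qed.

Lemma Ncnt_step (l : seq int) (m : int) : uniq l ->
  Ncnt l (m + 1) = addn (Ncnt l m) ((m + 1) \in l).
Proof.
move=> Hu; rewrite /Ncnt -count_uniq_mem //.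
have E : count (predI (fun y => y <= m) (pred1 (m + 1))) l = 0%N.
  rewrite -(count_pred0 l); apply: eq_count => y /=; apply/negbTE; apply/andP => [[H1 /eqP H2]].
  move: H1; rewrite H2; lia.
rewrite -count_predUI E addn0; apply: eq_count => y /=.
rewrite (_ : (y <= m + 1) = (y <= m) || (y == m + 1)) //.
apply/idP/orP.
- move=> H; case: (leP y m) => H'; [by left|right; apply/eqP; lia].
- case => [H|/eqP ->]; lia.
Qed.

Section Counting.
Variables (up : int -> bool) (ins cs : seq int) (M0 : int).
Hypotheses (Hleft : forall n, n <= M0 -> ~~ up n)
  (Hins : forall c, c \in ins = ~~ up (c - 1) && up c)
  (Hcs : forall c, c \in cs = up (c - 1) && ~~ up c)
  (Sins : sorted <%R ins) (Scs : sorted <%R cs).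

Lemma count_inv (t : nat) : Ncnt ins (M0 + t%:Z) = addn (Ncnt cs (M0 + t%:Z)) (up (M0 + t%:Z)).
Proof.
elim: t => [|t IH].
- rewrite addr0 (negbTE (Hleft (lexx _))) addn0.
  have Z : forall l : seq int, (forall c, c \in l -> up c || up (c - 1)) -> Ncnt l M0 = 0%N.
    move=> l Hl; apply/eqP; rewrite -leqn0 leqNgt -has_count; apply/hasPn => y Hy /=.
    apply/negP => Hy'; case/orP: (Hl y Hy) => H.
      by move: (Hleft Hy'); rewrite H.
    have : y - 1 <= M0 by lia.
    by move/Hleft; rewrite H.
  rewrite !Z // => c; [rewrite Hcs|rewrite Hins]; case: (up c); by case: (up (c-1)).
- have -> : M0 + t.+1%:Z = (M0 + t%:Z) + 1 by lia.
  rewrite !Ncnt_step ?lt_sorted_uniq // IH Hins Hcs.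
  rewrite (_ : M0 + t%:Z + 1 - 1 = M0 + t%:Z); last by lia.
  by case: (up (M0 + t%:Z)); case: (up (M0 + t%:Z + 1)); rewrite /= ?addn0 ?addn1.
Qed.

Lemma count_inv' (m : int) : M0 <= m -> Ncnt ins m = addn (Ncnt cs m) (up m).
Proof.
move=> H; have -> : m = M0 + (`|m - M0|%N)%:Z by lia.
exact: count_inv.
Qed.

Lemma mem_gt c : c \in ins -> M0 < c.
Proof.
rewrite Hins => /andP [_ H]; rewrite ltNge; apply/negP => /Hleft; by rewrite H.
Qed.
Lemma mem_gt' c : c \in cs -> M0 < c - 1.
Proof.
rewrite Hcs => /andP [H _]; rewrite ltNge; apply/negP => /Hleft; by rewrite H.
Qed.

Hypothesis Hsize : size ins = (size cs).+1.

Lemma corner_facts k : (k < size cs)%N ->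
  let c := nth 0 cs k in let i := nth 0 ins k in
  [/\ i < c, (forall n, i <= n -> n < c -> up n), ~~ up (i - 1),
      up (c - 1) && ~~ up c &
      ((0 < k)%N -> nth 0 cs k.-1 <= i - 1)].
Proof.
move=> Hkc c i.
have Hki : (k < size ins)%N by rewrite Hsize; lia.
have cin : c \in cs by apply: mem_nth.
have iin : i \in ins by apply: mem_nth.
have := cin; rewrite Hcs => /andP [uc1 uc].
have := iin; rewrite Hins => /andP [ui1 ui].
have cM := mem_gt' cin; have iM := mem_gt iin.
have Ncs_c1 : (k <= Ncnt cs (c - 1))%N.
  case: (posnP k) => [->|Hk0] //.
  have Hk1 : (k.-1 < size cs)%N by apply: leq_ltn_trans (leq_pred k) Hkc.
  have H : nth 0 cs k.-1 < c.
    by apply: (sorted_ltn_nth lt_trans) => //; rewrite ?inE // ltn_predL.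
  have : (k.-1 < Ncnt cs (c - 1))%N by rewrite -Ncnt_nth //; lia.
  by rewrite prednK.
have Nic : (k < Ncnt ins (c - 1))%N.
  rewrite count_inv' ?uc1; last by lia.
  by rewrite addn1 ltnS.
have ilec : i <= c - 1 by rewrite Ncnt_nth.
split => //.
- lia.
- move=> n H1 H2.
  have Mn : M0 <= n by lia.
  have Hn : (k < Ncnt ins n)%N by rewrite -Ncnt_nth.
  have Hn2 : (Ncnt cs n <= k)%N.
    rewrite leqNgt -Ncnt_nth // -/c; lia.
  move: (count_inv' Mn) Hn Hn2.
  case: (up n) => //=.
  by move=> ->; rewrite addn0 => H3 H4; move: (leq_trans H3 H4); rewrite ltnn.
- by rewrite uc1 uc.
- move=> Hk.
  have Ni : (Ncnt ins (i - 1) = k)%N.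
    apply/eqP; rewrite eqn_leq; apply/andP; split.
      rewrite leqNgt -Ncnt_nth // -/i; lia.
    have Hk1 : (k.-1 < size ins)%N by apply: leq_ltn_trans (leq_pred k) Hki.
    have H : nth 0 ins k.-1 < i.
      by apply: (sorted_ltn_nth lt_trans) => //; rewrite ?inE // ltn_predL.
    have : (k.-1 < Ncnt ins (i - 1))%N by rewrite -Ncnt_nth //; lia.
    by rewrite prednK.
  have Mi : M0 <= i - 1 by lia.
  move: (count_inv' Mi); rewrite (negbTE ui1) addn0 Ni => Nc.
  have : (k.-1 < Ncnt cs (i - 1))%N by rewrite -Nc prednK.
  rewrite -Ncnt_nth //; apply: leq_ltn_trans (leq_pred k) Hkc.
Qed.
End Counting.

Lemma intrS {R : realType} (c : int) (t : nat) :
  (c - t.+1%:Z)%:~R = (c - t%:Z)%:~R - 1 :> R.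
Proof. rewrite !rmorphB /= -!pmulrn -natr1; lra. Qed.

Lemma intrn {R : realType} (n : nat) : (n%:Z)%:~R = n%:R :> R.
Proof. by rewrite -pmulrn. Qed.

Lemma tele {R : realType} lam (c : int) (d : nat) :
  (forall t : nat, (t < d)%N -> @sl R lam (c - t.+1%:Z) = 1) ->
  forall t : nat, (t <= d)%N -> forall s : R, c%:~R - t%:R <= s <= c%:~R ->
  Fl lam s = Fl lam c%:~R - (c%:~R - s).
Proof.
move=> Hs; elim => [|t IH] Ht s Hs'.
  have -> : s = c%:~R by apply/le_anti; move: Hs'; rewrite subr0 andbC.
  lra.
have E1 : t.+1%:R = t%:R + 1 :> R by rewrite natr1.
case: (lerP (c%:~R - t%:R) s) => H.
  apply: IH => //; [exact: ltnW | by rewrite H; case/andP: Hs'].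
set n := c - t.+1%:Z.
have E : n%:~R = c%:~R - t%:R - 1 :> R by rewrite /n rmorphB /= intrn; lra.
rewrite (@F_affine R lam n s); last first.
  rewrite E; case/andP: Hs' => H1 H2; apply/andP; split; lra.
have Hsl := Hs t Ht; rewrite -/n in Hsl; rewrite Hsl.
have Hn1 : @Fl R lam (n%:~R + 1) = Fl lam n%:~R + 1 by move: Hsl; rewrite /sl; lra.
have := IH (ltnW Ht) (c%:~R - t%:R); rewrite lexx /=.
have -> : c%:~R - t%:R = n%:~R + 1 :> R by rewrite E; lra.
have t0 := ler0n R t.
rewrite Hn1 => /(_ ltac:(rewrite E; lra)).
lra.
Qed.

Lemma run_bound {R : realType} lam (e : nat) (c : int) (d : nat) :
  (2 <= e)%N -> is_partition lam -> e_regular e lam ->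
  @sl R lam c = -1 -> (0 < d)%N ->
  (forall t : nat, (t < d)%N -> @sl R lam (c - t.+1%:Z) = 1) -> (d < e)%N.
Proof.
move=> He2 [Hsort Hpos] Hreg Hc Hd0 Hs.
set cR : R := c%:~R.
have T := tele Hs.
have Fp : Fl lam (cR + 2^-1) = Fl lam cR - 2^-1.
  rewrite (@F_affine R lam c); last by rewrite /cR; apply/andP; split; lra.
  rewrite Hc /cR; lra.
have Fm : Fl lam (cR - 2^-1) = Fl lam cR - 2^-1.
  rewrite (T 1%N Hd0); first by rewrite /cR; lra.
  by rewrite /cR; apply/andP; split; lra.
case: (Fr_attain lam 0 cR) => [Habs|[j [Hj Hcj]]].
  have A1 := Fr_ge_abs lam 0 (cR + 2^-1).
  have A2 := Fr_ge_abs lam 0 (cR - 2^-1).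
  rewrite -/(Fl lam _) Fp /Fl Habs in A1.
  rewrite -/(Fl lam _) Fm /Fl Habs in A2.
  exfalso; case: (lerP 0 cR) => Hc0.
    move: A1; rewrite !ger0_norm //; lra.
  move: A2; rewrite !ltr0_norm //; lra.
rewrite add0n in Hcj; rewrite -/(Fl lam cR) in Hcj.
set la := nth 0%N lam j in Hcj.
have h1 := @Fr_ge_tent R lam 0%N (cR + 2^-1) j Hj; rewrite add0n -/la -/(Fl lam _) Fp in h1.
have h2 := @Fr_ge_tent R lam 0%N (cR - 2^-1) j Hj; rewrite add0n -/la -/(Fl lam _) Fm in h2.
have h3 : Fl lam cR <= cR + 2 * la%:R /\ Fl lam cR <= 2 * j.+1%:R - cR.
  by move: (lexx (Fl lam cR)); rewrite {2}Hcj /tentf le_min => /andP.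
have EJ : j.+1%:R = j%:R + 1 :> R by rewrite natr1.
have key1 : 2 * j.+1%:R - cR = Fl lam cR.
  move: h1; rewrite /tentf ge_min => /orP [] ?; lra.
have key2 : cR + 2 * la%:R = Fl lam cR.
  move: h2; rewrite /tentf ge_min => /orP [] ?; lra.
have Hrow : forall t, (t <= j)%N -> (t < d)%N -> nth 0%N lam (j - t) = la.
  move=> t Htj Htd.
  have Hjt : (j - t < size lam)%N by apply: leq_ltn_trans (leq_subr _ _) Hj.
  have t0 := ler0n R t.
  have ET : t.+1%:R = t%:R + 1 :> R by rewrite natr1.
  have Fx := T t.+1 Htd (cR - t.+1%:R) ltac:(apply/andP; split; lra).
  have := @Fr_ge_tent R lam 0%N (cR - t.+1%:R) (j - t) Hjt; rewrite add0n -/(Fl lam _) Fx.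
  rewrite /tentf ge_min -[(j - t).+1%:R]natr1 natrB // => /orP [] H; last by exfalso; rewrite /cR in H; lra.
  have Hle : (nth 0%N lam (j - t) <= la)%N by rewrite -(ler_nat R); lra.
  apply/eqP; rewrite eqn_leq Hle /=.
  have := sorted_leq_nth geq_trans' leqnn 0%N Hsort.
  by move=> /(_ (j - t)%N j); rewrite !inE => /(_ Hjt Hj (leq_subr _ _)).
have Hdj : (d <= j.+1)%N.
  rewrite leqNgt; apply/negP => Hlt.
  have ET : j.+2%:R = j%:R + 2 :> R by rewrite -natr1 EJ; lra.
  have j0 := ler0n R j.
  have Fx := T j.+2 Hlt (cR - j.+2%:R) ltac:(apply/andP; split; lra).
  have := Fr_ge_abs lam 0 (cR - j.+2%:R); rewrite -/(Fl lam _) Fx.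
  have l0 := ler0n R la.
  rewrite ler0_norm; lra.
rewrite ltnNge; apply/negP => Hed.
have := Hreg (j.+2 - d)%N ltac:(lia) ltac:(lia).
have -> : ((j.+2 - d) + e - 1).-1 = (j - (d - e))%N by lia.
have -> : (j.+2 - d).-1 = (j - (d - 1))%N by lia.
rewrite !Hrow; first by rewrite ltnn.
all: lia.
Qed.

Lemma real_part (R : realFieldType) (F w0 w1 : R -> R) (hk ik ck E d Fc : R) :
  2 <= E -> 1 <= d -> d + 1 <= E -> ck = ik + d -> Fc = F ck ->
  (forall s, ik <= s <= ck -> F s = Fc - (ck - s)) ->
  (forall s, ik - 1 <= s <= ik -> F s = Fc - d + ik - s) ->
  (forall s, ik - 1 <= s -> w0 s = F s) ->
  let L := fun s => Fc + (1 - 2 / E) * (s - ck) in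
  hk < ck -> w0 hk = L hk -> (forall s, hk < s < ck -> w0 s != L s) ->
  (forall s, w1 s = if hk <= s <= ck then L s else w0 s) ->
  [/\ ik - 1 <= hk < ik,
      (forall s : R, ~ (ik - 1 < s < ck) -> w1 s = w0 s) &
      (forall s : R, ik - 1 < s < ck -> 0 <= w1 s - w0 s <= E)].
Proof.
move=> E2 d1 dE HiR' EFc Fright Fleft wk1 L hlt hv hne hw.
have Fi : F ik = Fc - d by rewrite Fright; [lra | apply/andP; split; lra].
set q : R := 2 / E.
have E0 : E != 0 by apply/negP => /eqP; lra.
have E10 : E - 1 != 0 by apply/negP => /eqP; lra.
have Eq : q * E = 2 by rewrite /q divfK.
have q0 : 0 < q by rewrite /q divr_gt0 //; lra.
have q1 : q <= 1 by rewrite /q ler_pdivrMr; lra.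
set u : R := d / (E - 1).
have u0 : 0 < u by rewrite /u divr_gt0 //; lra.
have u1 : u <= 1 by rewrite /u ler_pdivrMr; lra.
have Equ : (2 - q) * u = q * d.
  rewrite /u /q; field; apply/andP; split => //.
rewrite -/q in L hv hne hw.
set z := ik - u.
have Fz : F z = Fc + (1 - q) * (z - ck).
  rewrite (Fleft z); last by rewrite /z; apply/andP; split; lra.
  rewrite /z HiR'; lra.
have Fpos : forall s, z < s < ck -> F s < L s.
  move=> s /andP [H1 H2]; rewrite /L; case: (lerP s ik) => H3.
    rewrite (Fleft s); last by apply/andP; split; rewrite /z in H1; lra.
    have P : 0 < (2 - q) * (s - z) by apply: mulr_gt0; lra.
    rewrite /z in P; rewrite HiR'; lra.
  rewrite (Fright s); last by apply/andP; split; lra.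
  have P : 0 < q * (ck - s) by apply: mulr_gt0; lra.
  lra.
have zc : z < ck by rewrite /z; lra.
have zi : ik - 1 <= z by rewrite /z; lra.
have hz : hk = z.
  case: (ltgtP hk z) => // H.
  - exfalso; have := hne z; rewrite H zc /= wk1 // Fz /L eqxx; by move=> /(_ isT).
  - exfalso; have := hv; rewrite wk1; last by lra.
    have := Fpos hk; rewrite H hlt => /(_ isT) H' H''; by move: H'; rewrite H'' ltxx.
have qd : q * d <= d by have := @mulr_ge0 R (1 - q) d ltac:(lra) ltac:(lra); lra.
split.
- by rewrite hz /z; apply/andP; split; lra.
- move=> s Hs'; rewrite hw.
  case: ifP => // /andP [H1 H2].
  case: (lerP s (ik - 1)) => H3.
    have -> : s = hk by apply/le_anti; rewrite H1 andbT hz; lra.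
    by rewrite hv.
  have -> : s = ck.
    apply/le_anti; rewrite H2 /=; rewrite leNgt; apply/negP => H4; apply: Hs'.
    by rewrite H3 H4.
  rewrite wk1 /L; last by lra.
  rewrite EFc; lra.
- move=> s /andP [H1 H2]; rewrite hw.
  case: ifP => [/andP [H3 H4]|_]; last by rewrite subrr lexx /=; lra.
  rewrite wk1 /L; last by lra.
  rewrite hz in H3.
  case: (lerP s ik) => H5.
    rewrite (Fleft s); last by apply/andP; split; lra.
    have P : 0 <= (2 - q) * (s - z) by apply: mulr_ge0; lra.
    have P2 : (2 - q) * (s - z) <= (2 - q) * u by apply: ler_wpM2l; rewrite /z; lra.
    rewrite /z in P P2; apply/andP; split; rewrite HiR'; lra.
  rewrite (Fright s); last by apply/andP; split; lra.
  have P : 0 <= q * (ck - s) by apply: mulr_ge0; lra.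
  have P2 : q * (ck - s) <= q * d by apply: ler_wpM2l; lra.
  apply/andP; split; lra.
Qed.

Lemma bool_iff (b b' : bool) (P : Prop) : (b <-> P) -> (P <-> b') -> b = b'.
Proof. by move=> H1 H2; apply/idP/idP => [/H1/H2|/H2/H1]. Qed.

Unset Implicit Arguments.
Local Close Scope classical_set_scope.

Theorem proposition5p3 (R : realType) (e : nat) (lam : seq nat)
    (cs ins : seq int) (w : nat -> R -> R) (h : nat -> R) :
  (2 <= e)%N ->
  is_partition lam -> e_regular e lam ->
  sorted <%R cs -> (forall c : int, c \in cs <-> outer_corner (@omega R lam) c) ->
  sorted <%R ins -> (forall c : int, c \in ins <-> inner_corner (@omega R lam) c) ->
  size ins = (size cs).+1 ->
  outer_flattening e lam cs w h ->
  forall k : nat, (1 <= k <= size cs)%N ->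
    let ck : R := (nth 0 cs k.-1)%:~R in
    let ik : R := (nth 0 ins k.-1)%:~R in
    [/\ ik - 1 <= h k < ik,
        (forall s : R, ~ (ik - 1 < s < ck) -> w k s = w k.-1 s) &
        (forall s : R, ik - 1 < s < ck ->
           0 <= w k s - w k.-1 s <= e%:R)].
Proof.
move=> He Hpart Hreg Scs Hcs Sins Hins Hsize [Hw0 Hflat] k Hk ck ik.
have OF := omega_F (R := R) Hpart.
rewrite OF in Hcs Hins Hw0 Hflat.
set up := fun n : int => (@sl R lam n == 1).
have m11 : ((-1 : R) == 1) = false by apply/negP => /eqP; lra.
have slm : forall n, (@sl R lam n = -1) <-> ~~ up n.
  move=> n; rewrite /up; case: (@sl_pm R lam n) => ->; rewrite ?eqxx ?m11; split => //; lra.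
have slp : forall n, (@sl R lam n = 1) <-> up n.
  move=> n; rewrite /up; split; [by move=> ->|by move/eqP].
have Hins' : forall c, c \in ins = ~~ up (c - 1) && up c.
  move=> c; apply: bool_iff (Hins c) _; rewrite inner_iff slm slp.
  by split => [[-> ->]|/andP [-> ->]].
have Hcs' : forall c, c \in cs = up (c - 1) && ~~ up c.
  move=> c; apply: bool_iff (Hcs c) _; rewrite outer_iff slm slp.
  by split => [[-> ->]|/andP [-> ->]].
set M0 : int := - (sumn lam)%:Z - 1.
have Hleft : forall n, n <= M0 -> ~~ up n by move=> n /sl_left H; apply/slm; exact: H.
have Hk' : (k.-1 < size cs)%N by lia.
have [Hic Hrun ui1 /andP [uc1 uc] Hprev] :=
  @corner_facts up ins cs M0 Hleft Hins' Hcs' Sins Scs Hsize k.-1 Hk'.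
set c := nth 0 cs k.-1 in Hic Hrun uc1 uc ck *.
set i := nth 0 ins k.-1 in Hic Hrun ui1 Hprev ik *.
have [d Hd] : exists d : nat, c = i + d%:Z by exists `|c - i|%N; lia.
have d0 : (0 < d)%N by lia.
have Hs : forall t : nat, (t < d)%N -> @sl R lam (c - t.+1%:Z) = 1.
  move=> t Ht; apply/slp; apply: Hrun; lia.
have de := run_bound He Hpart Hreg (proj2 (slm c) uc) d0 Hs.
have W : forall j, (j <= size cs)%N -> forall s,
    (j = 0%N \/ (nth 0 cs j.-1)%:~R <= s) -> w j s = Fl lam s.
  elim => [|j IH] Hj s Hjs; first by rewrite Hw0.
  have Hj1 : (1 <= j.+1 <= size cs)%N by rewrite Hj.
  have := Hflat j.+1 Hj1; cbv zeta => -[_ _ _ ->] /=.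
  case: Hjs => [//|Hcs1] /=.
  case: ifP => [/andP [_ H2]|_].
    have -> : s = (nth 0 cs j)%:~R by apply/le_anti; rewrite H2 Hcs1.
    lra.
  apply: IH; first exact: ltnW.
  case: j {Hj1} Hj Hcs1 => [|j] Hj Hcs1 /=; [by left|right].
  apply: le_trans Hcs1; apply: ltW; rewrite ltr_int.
  have := @sorted_ltn_nth _ <%R lt_trans 0 cs Scs j j.+1; rewrite !inE; apply => //; exact: ltnW.

have d1 : 1 <= d%:R :> R by rewrite ler1n.
have HiR : ik = ck - d%:R by rewrite /ik /ck Hd rmorphD /= intrn; lra.
have Fright : forall s, ik <= s <= ck -> Fl lam s = Fl lam ck - (ck - s).
  move=> s Hs'; apply: (tele Hs (leqnn d)); rewrite -HiR; exact: Hs'.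
have Fi : Fl lam ik = Fl lam ck - d%:R.
  rewrite Fright; [lra | rewrite lexx HiR /=; lra].
have Fleft : forall s, ik - 1 <= s <= ik -> Fl lam s = Fl lam ck - d%:R + ik - s.
  move=> s Hs'.
  have Ei : (i - 1)%:~R = ik - 1 :> R by rewrite rmorphB.
  have sl1 := proj2 (slm (i - 1)) ui1.
  have sl1' : Fl lam ik - Fl lam (ik - 1) = -1 by move: sl1; rewrite /sl Ei subrK.
  rewrite (@F_affine R lam (i - 1) s) ?Ei ?sl1 //; lra.

have wk1 : forall s, ik - 1 <= s -> w k.-1 s = Fl lam s.
  move=> s Hs'; apply: W; first by lia.
  case: (posnP k.-1) => [->|Hk0]; [by left|right].
  apply: le_trans Hs'; have := Hprev Hk0; rewrite -(ler_int R) rmorphB /=.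
  by rewrite -/i -/ik.
have := Hflat k Hk; cbv zeta; rewrite -/c -/ck.
move=> -[hlt hv hne hw].
have E2 : 2 <= e%:R :> R by rewrite (ler_nat R 2 e).
have dR : d%:R + 1 <= e%:R :> R by rewrite natr1 ler_nat.
have HiR' : ck = ik + d%:R by rewrite HiR; lra.
exact: (@real_part R (Fl lam) (w k.-1) (w k) (h k) ik ck e%:R d%:R (Fl lam ck)
  E2 d1 dR HiR' erefl Fright Fleft wk1 hlt hv hne hw).
Qed.
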